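(* Let $n\ge 2$. The set $\mathcal{S}$ of generalised Svetlichny correlators for $n$ parties (inputs $s_j\in\mathbb{Z}_{c_j}$, outputs in $\mathbb{Z}_d$, $d$ prime) equals the convex hull of the deterministic correlators $p(k|\mathbf{s})=\delta^k_{f(\mathbf{s})}$ where $f$ ranges over all bipartite linear functions $f:\mathbb{Z}_{c_1}\times\cdots\times\mathbb{Z}_{c_n}\to\mathbb{Z}_d$.
   Context: Generalised Svetlichny correlations are convex combinations, over nonempty proper subsets $\mathcal{J}\subset\{1,\dots,n\}$, of distributions $p(\mathbf{m}|\mathbf{s})=\int p(\lambda)d\lambda\; p(\mathbf{m}_{\mathcal{J}}|\mathbf{s}_{\mathcal{J}},\lambda)\,p(\mathbf{m}_{\mathcal{J}^c}|\mathbf{s}_{\mathcal{J}^c},\lambda)$, where $\mathbf{m}_{\mathcal{J}}=(m_j)_{j\in\mathcal{J}}$ etc., and the conditional distributions within each side of the partition are arbitrary (possibly signalling). Their correlators $p(k|\mathbf{s})=\sum_{\mathbf{m}:[\sum_j m_j]_d=k}p(\mathbf{m}|\mathbf{s})$ form $\mathcal{S}$; $[\cdot]_d$ is reduction mod $d$. A function $f$ is bipartite linear if for some nonempty proper $\mathcal{J}$ there are functions $f^1$ of $\mathbf{s}_{\mathcal{J}}$ and $f^2$ of $\mathbf{s}_{\mathcal{J}^c}$ into $\mathbb{Z}_d$ with $f(\mathbf{s})=[f^1(\mathbf{s}_{\mathcal{J}})+f^2(\mathbf{s}_{\mathcal{J}^c})]_d$. *)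

(* Defs.v *)
From HB Require Import structures.
From mathcomp Require Import all_boot all_order all_algebra.
Set Implicit Arguments. Unset Strict Implicit. Unset Printing Implicit Defensive.
Import Order.TTheory GRing.Theory Num.Theory.
Local Open Scope ring_scope.

Section Svetlichny.
Variables (R : realFieldType) (n : nat) (c : 'I_n -> nat) (d : nat).

Definition input := forall j : 'I_n, 'I_(c j).
Definition output := {ffun 'I_n -> 'I_d}.

Definition parties (J : {set 'I_n}) := {j : 'I_n | j \in J}.
Definition input_on (J : {set 'I_n}) := forall j : parties J, 'I_(c (val j)).
Definition output_on (J : {set 'I_n}) := {ffun parties J -> 'I_d}.

Definition res_in (J : {set 'I_n}) (s : input) : input_on J :=
  fun j => s (val j).
Definition res_out (J : {set 'I_n}) (m : output) : output_on J :=
  [ffun j => m (val j)].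

(* an arbitrary (possibly signalling) conditional distribution p(m_J | s_J) *)
Arguments res_in J s : clear implicits.
Arguments res_out J m : clear implicits.

Definition cond_distr (J : {set 'I_n}) (P : input_on J -> output_on J -> R) :=
  forall sJ : input_on J,
    (forall mJ, 0 <= P sJ mJ) /\ \sum_(mJ : output_on J) P sJ mJ = 1.

Definition proper_part (J : {set 'I_n}) : bool := (J != set0) && (J != setT).

Definition bilocal (J : {set 'I_n}) (p : input -> output -> R) : Prop :=
  exists (L : nat) (w : 'I_L -> R)
         (P : 'I_L -> input_on J -> output_on J -> R)
         (Q : 'I_L -> input_on (~: J) -> output_on (~: J) -> R),
    [/\ forall l, 0 <= w l,
        \sum_(l < L) w l = 1,
        forall l, cond_distr (P l),
        forall l, cond_distr (Q l) &
        forall s m, p s m = \sum_(l < L) w l * P l (res_in J s) (res_out J m)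
                                            * Q l (res_in (~: J) s) (res_out (~: J) m)].

Definition gen_svetlichny (p : input -> output -> R) : Prop :=
  exists (mu : {set 'I_n} -> R) (pJ : {set 'I_n} -> input -> output -> R),
    [/\ forall J, 0 <= mu J,
        \sum_(J : {set 'I_n}) mu J = 1,
        forall J, ~~ proper_part J -> mu J = 0,
        forall J, proper_part J -> bilocal J (pJ J) &
        forall s m, p s m = \sum_(J : {set 'I_n}) mu J * pJ J s m].

Definition correlator_of (p : input -> output -> R) (s : input) (k : 'I_d) : R :=
  \sum_(m : output | ((\sum_j (m j : nat)) %% d)%N == k) p s m.

Definition svetlichny_correlator (q : input -> 'I_d -> R) : Prop :=
  exists p, gen_svetlichny p /\ forall s k, q s k = correlator_of p s k.

Definition bipartite_linear (f : input -> 'I_d) : Prop :=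
  exists (J : {set 'I_n}) (f1 : input_on J -> 'I_d) (f2 : input_on (~: J) -> 'I_d),
    proper_part J /\
    forall s, (f s : nat) = ((f1 (res_in J s) + f2 (res_in (~: J) s)) %% d)%N.

Definition det_correlator (f : input -> 'I_d) (s : input) (k : 'I_d) : R :=
  if k == f s then 1 else 0.

Definition in_hull_bilinear (q : input -> 'I_d -> R) : Prop :=
  exists (N : nat) (w : 'I_N -> R) (f : 'I_N -> input -> 'I_d),
    [/\ forall i, 0 <= w i,
        \sum_(i < N) w i = 1,
        forall i, bipartite_linear (f i) &
        forall s k, q s k = \sum_(i < N) w i * det_correlator (f i) s k].

End Svetlichny.

(* Main.v *)
Require Import Defs.
From HB Require Import structures.
From mathcomp Require Import all_boot all_order all_algebra.
From Stdlib Require Import FunctionalExtensionality ClassicalEpsilon.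
Set Implicit Arguments. Unset Strict Implicit. Unset Printing Implicit Defensive.
Import Order.TTheory GRing.Theory Num.Theory.
Local Open Scope ring_scope.

Section Aux.
Variables (R : realFieldType) (n : nat) (c : 'I_n -> nat) (d : nat).
Hypothesis hd0 : (0 < d)%N.

Definition z0 : 'I_d := Ordinal hd0.

Definition glue (J : {set 'I_n}) (a : output_on d J) (b : output_on d (~: J))
  : output n d :=
  [ffun j => match (insub j : option (parties J)) with
             | Some x => a x
             | None => match (insub j : option (parties (~: J))) with
                       | Some y => b y | None => z0 end end].

Lemma glueP J (a : output_on d J) (b : output_on d (~: J)) (m : output n d) :
  ((res_out J m == a) && (res_out (~: J) m == b)) = (m == glue a b).
Proof.
apply/andP/eqP.
- move=> [/eqP Ha /eqP Hb]; apply/ffunP => j; rewrite ffunE.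
  case: insubP => [x xJ xj | xJ]; first by rewrite -Ha ffunE xj.
  case: insubP => [y yJ yj | ]; first by rewrite -Hb ffunE yj.
  by rewrite in_setC xJ.
- move=> ->; split; apply/eqP/ffunP => x; rewrite !ffunE.
  + case: insubP => [y _ yx | ]; first by have -> : y = x by apply: val_inj.
    by rewrite (valP x).
  + case: insubP => [y yJ _ | _].
    * by have := valP x; rewrite in_setC yJ.
    case: insubP => [y _ yx | ]; first by have -> : y = x by apply: val_inj.
    by rewrite (valP x).
Qed.

Lemma sum_glue (Pm : pred (output n d)) J (a : output_on d J) (b : output_on d (~: J)) :
  \sum_(m | Pm m) ((a == res_out J m)%:R * (b == res_out (~: J) m)%:R : R)
  = (Pm (glue a b))%:R.
Proof.
rewrite (eq_bigr (fun m => ((m == glue a b)%:R : R))); last first.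
  by move=> m _; rewrite -natrM mulnb eq_sym [b == _]eq_sym glueP.
rewrite big_mkcond (bigD1 (glue a b)) //= eqxx big1 ?addr0.
  by case: (Pm _).
by move=> m /negbTE ->; case: (Pm m) => /=; rewrite ?mulr0 ?mul0r.
Qed.

Lemma glue_sum J (a : output_on d J) (b : output_on d (~: J)) :
  (\sum_j (glue a b j : nat) =
   \sum_(x : parties J) (a x : nat) + \sum_(y : parties (~: J)) (b y : nat))%N.
Proof.
rewrite (bigID (fun j => j \in J)) /=.
rewrite [X in (_ + X)%N](eq_bigl (fun j => j \in ~: J)); last first.
  by move=> j; rewrite in_setC.
have := big_sub (op := addn) J (fun j => (glue a b j : nat)).
move=> H1.
have := big_sub (op := addn) (~: J) (fun j => (glue a b j : nat)).
move=> H2; rewrite H1 H2.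
congr addn; apply: eq_bigr => x _; rewrite ffunE.
- case: insubP => [y _ yx | ]; first by have -> : y = x by apply: val_inj.
  by rewrite (valP x).
- case: insubP => [y yJ _ | _].
    by have := valP x; rewrite in_setC yJ.
  case: insubP => [y _ yx | ]; first by have -> : y = x by apply: val_inj.
  by rewrite (valP x).
Qed.

Lemma decomp (X Y : finType) (P : X -> Y -> R) :
  (forall x y, 0 <= P x y) -> (forall x, \sum_y P x y = 1) ->
  forall x0 y0, P x0 y0 =
    \sum_(g : {ffun X -> Y}) (\prod_x P x (g x)) * (g x0 == y0)%:R.
Proof.
move=> P0 P1 x0 y0.
have := @bigA_distr_bigA R 0 1 *%R +%R X Y
  (fun x y => P x y * (if x == x0 then (y == y0)%:R else 1)).
rewrite (bigD1 x0) //= eqxx [X in _ * X = _ -> _]big1; last first.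
  move=> x /negbTE ->; under eq_bigr do rewrite mulr1; exact: P1.
rewrite mulr1 (bigD1 y0) //= eqxx mulr1 [X in _ + X = _ -> _]big1 ?addr0; last first.
  by move=> y /negbTE ->; rewrite mulr0.
move=> ->; apply: eq_bigr => g _.
rewrite big_split /=; congr (_ * _).
rewrite (bigD1 x0) //= eqxx big1 ?mulr1 //.
by move=> x /negbTE ->.
Qed.

Lemma decomp_sum (X Y : finType) (P : X -> Y -> R) :
  (forall x, \sum_y P x y = 1) ->
  \sum_(g : {ffun X -> Y}) (\prod_x P x (g x)) = 1.
Proof.
move=> P1; rewrite -(@bigA_distr_bigA R 0 1 *%R +%R X Y P); exact: big1.
Qed.

End Aux.

Section Cone.
Variables (R : realFieldType) (n : nat) (c : 'I_n -> nat) (d : nat).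

Definition cone (t : R) (q : input c -> 'I_d -> R) :=
  exists N (w : 'I_N -> R) (f : 'I_N -> input c -> 'I_d),
    [/\ forall i, 0 <= w i, \sum_(i < N) w i = t,
        forall i, bipartite_linear (f i) &
        forall s k, q s k = \sum_(i < N) w i * det_correlator R (f i) s k].

Definition ord0_elim (T : Type) (i : 'I_0) : T :=
  False_rect T (Bool.diff_true_false (etrans (esym (ltn_ord i)) (ltn0 i))).

Lemma cone0 : cone 0 (fun _ _ => 0).
Proof.
exists 0%N, (fun _ => 0), (fun i => ord0_elim _ i); split.
- by [].
- by rewrite big_ord0.
- by case.
- by move=> s k; rewrite big_ord0.
Qed.

Lemma cone_ext t t' q q' : cone t q -> t = t' -> (forall s k, q s k = q' s k) ->
  cone t' q'.
Proof.
move=> [N [w [f [w0 wt fb qe]]]] <- qq; exists N, w, f; split => // s k.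
by rewrite -qq.
Qed.

Lemma cone_det f : bipartite_linear f -> cone 1 (det_correlator R f).
Proof.
move=> fb; exists 1%N, (fun _ => 1), (fun _ => f); split => //.
- by rewrite big_ord1.
- by move=> s k; rewrite big_ord1 mul1r.
Qed.

Lemma cone_scale a t q : 0 <= a -> cone t q -> cone (a * t) (fun s k => a * q s k).
Proof.
move=> a0 [N [w [f [w0 wt fb qe]]]]; exists N, (fun i => a * w i), f; split => //.
- by move=> i; rewrite mulr_ge0.
- by rewrite -mulr_sumr wt.
- by move=> s k; rewrite qe mulr_sumr; apply: eq_bigr => i _; rewrite mulrA.
Qed.

Lemma cone_add t1 t2 q1 q2 : cone t1 q1 -> cone t2 q2 ->
  cone (t1 + t2) (fun s k => q1 s k + q2 s k).
Proof.
move=> [N1 [w1 [f1 [w10 wt1 fb1 qe1]]]] [N2 [w2 [f2 [w20 wt2 fb2 qe2]]]].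
exists (N1 + N2)%N,
  (fun i => match split i with inl a => w1 a | inr b => w2 b end),
  (fun i => match split i with inl a => f1 a | inr b => f2 b end); split.
- by move=> i; case: (split i).
- rewrite big_split_ord /= -wt1 -wt2; congr (_ + _); apply: eq_bigr => i _.
  + by rewrite (unsplitK (inl i)).
  + by rewrite (unsplitK (inr i)).
- by move=> i; case: (split i).
- move=> s k; rewrite big_split_ord /= qe1 qe2; congr (_ + _); apply: eq_bigr => i _.
  + by rewrite (unsplitK (inl i)).
  + by rewrite (unsplitK (inr i)).
Qed.

Lemma cone_sum (I : Type) (r : seq I) (t : I -> R) (F : I -> input c -> 'I_d -> R) :
  (forall i, cone (t i) (F i)) ->
  cone (\sum_(i <- r) t i) (fun s k => \sum_(i <- r) F i s k).
Proof.
move=> H; elim: r => [|i r IH].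
  apply: cone_ext cone0 _ _; first by rewrite big_nil.
  by move=> s k; rewrite big_nil.
apply: cone_ext (cone_add (H i) IH) _ _; rewrite ?big_cons //.
by move=> s k; rewrite big_cons.
Qed.

Lemma cone_hull q : cone 1 q -> in_hull_bilinear q.
Proof. by []. Qed.

End Cone.

Section Fwd.
Variables (R : realFieldType) (n : nat) (c : 'I_n -> nat) (d : nat).
Hypothesis hd0 : (0 < d)%N.

Definition XT (J : {set 'I_n}) := {dffun forall j : parties J, 'I_(c (val j))}.
Definition toX J (sJ : input_on c J) : XT J := [ffun j => sJ j].
Definition ofX J (x : XT J) : input_on c J := fun j => x j.
Lemma ofXK J (sJ : input_on c J) : ofX (toX sJ) = sJ.
Proof. apply: functional_extensionality_dep => j; by rewrite /ofX /toX ffunE. Qed.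

Definition F1 J (g : {ffun XT J -> output_on d J}) (sJ : input_on c J) : 'I_d :=
  Ordinal (ltn_pmod (\sum_x (g (toX sJ) x : nat)) hd0).

Definition fgh J (g : {ffun XT J -> output_on d J})
  (h : {ffun XT (~: J) -> output_on d (~: J)}) (s : input c) : 'I_d :=
  Ordinal (ltn_pmod (F1 g (res_in s) + F1 h (res_in s)) hd0).

Lemma Pdec J (P : input_on c J -> output_on d J -> R) : cond_distr P ->
  forall sJ mJ, P sJ mJ = \sum_(g : {ffun XT J -> output_on d J})
     (\prod_x P (ofX x) (g x)) * (g (toX sJ) == mJ)%:R.
Proof.
move=> HP sJ mJ.
rewrite -(decomp (P := fun x y => P (ofX x) y)) ?ofXK //.
- by move=> x y; case: (HP (ofX x)).
- by move=> x; case: (HP (ofX x)).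
Qed.

Lemma bil_cone J (P : input_on c J -> output_on d J -> R)
  (Q : input_on c (~: J) -> output_on d (~: J) -> R) :
  proper_part J -> cond_distr P -> cond_distr Q ->
  cone 1 (fun (s : input c) (k : 'I_d) => \sum_(m : output n d | ((\sum_j (m j : nat)) %% d)%N == k)
     P (res_in s) (res_out J m) * Q (res_in s) (res_out (~: J) m)).
Proof.
move=> pJ HP HQ.
set al := fun g : {ffun XT J -> output_on d J} => \prod_x P (ofX x) (g x).
set be := fun h : {ffun XT (~: J) -> output_on d (~: J)} => \prod_x Q (ofX x) (h x).
have alS : \sum_g al g = 1.
  by apply: (decomp_sum (P := fun x y => P (ofX x) y)) => x; case: (HP (ofX x)).
have beS : \sum_h be h = 1.
  by apply: (decomp_sum (P := fun x y => Q (ofX x) y)) => x; case: (HQ (ofX x)).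
have al0 g : 0 <= al g by apply: prodr_ge0 => x _; case: (HP (ofX x)).
have be0 h : 0 <= be h by apply: prodr_ge0 => x _; case: (HQ (ofX x)).
have C : cone (\sum_g al g * \sum_h be h)
   (fun s k => \sum_g al g * \sum_h be h * det_correlator R (fgh g h) s k).
  apply: cone_sum => g; apply: cone_scale => //.
  have Hb h : bipartite_linear (fgh g h).
    by exists J, (F1 g), (F1 h); split.
  have := @cone_sum R n c d _ (index_enum {ffun XT (~: J) -> output_on d (~: J)})
     (fun h => be h * 1) (fun h s k => be h * det_correlator R (fgh g h) s k)
     (fun h => cone_scale (be0 h) (cone_det R (Hb h))).
  move=> /cone_ext; apply.
  - by apply: eq_bigr => h _; rewrite mulr1.
  - by [].
have E : \sum_g al g * \sum_h be h = 1.
  by rewrite beS; under eq_bigr do rewrite mulr1; exact: alS.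
apply: cone_ext C E _ => s k.
set sJ := toX (res_in (J := J) s); set sK := toX (res_in (J := ~: J) s).
transitivity (\sum_g \sum_h \sum_(m : output n d | ((\sum_j (m j : nat)) %% d)%N == k)
  (al g * (g sJ == res_out J m)%:R) * (be h * (h sK == res_out (~: J) m)%:R)).
  apply: eq_bigr => g _; rewrite mulr_sumr; apply: eq_bigr => h _.
  rewrite (eq_bigr (fun m => al g * (be h * ((g sJ == res_out J m)%:R *
               (h sK == res_out (~: J) m)%:R)))); last first.
    by move=> m _; rewrite -!mulrA; congr (_ * _); rewrite mulrCA.
  rewrite -!mulr_sumr (sum_glue R hd0) /det_correlator; congr (_ * (_ * _)).
  rewrite eq_sym -val_eqE /= modnDm glue_sum.
  by case: (_ == _).
rewrite exchange_big /=.
under eq_bigr => h _ do rewrite exchange_big /=.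
rewrite exchange_big /=.
apply: eq_bigr => m _.
rewrite (Pdec HP) (Pdec HQ) mulr_suml.
under [RHS]eq_bigr => g _ do rewrite mulr_sumr.
rewrite exchange_big /=.
by apply: eq_bigr => h _; apply: eq_bigr => g _.
Qed.

Lemma fwd (q : input c -> 'I_d -> R) : svetlichny_correlator q -> in_hull_bilinear q.
Proof.
move=> [p [[mu [pJ [mu0 muS mu_np bil pe]]] qe]].
apply: cone_hull.
have C : cone (\sum_J mu J) (fun s k => \sum_J mu J * correlator_of (pJ J) s k).
  apply: cone_sum => J; case: (boolP (proper_part J)) => pr.
  - move: (bil J pr) => [L [w [P [Q [w0 wS HP HQ pe']]]]].
    have C1 := @cone_sum R n c d _ (index_enum 'I_L) (fun l => w l * 1)
       (fun l s k => w l * \sum_(m : output n d | ((\sum_j (m j : nat)) %% d)%N == k)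
          P l (res_in s) (res_out J m) * Q l (res_in s) (res_out (~: J) m))
       (fun l => cone_scale (w0 l) (bil_cone pr (HP l) (HQ l))).
    apply: cone_ext (cone_scale (mu0 J) C1) _ _.
      by under eq_bigr do rewrite mulr1; rewrite wS mulr1.
    move=> s k; congr (_ * _); rewrite /correlator_of; symmetry.
    under eq_bigr => m _ do rewrite pe'.
    rewrite exchange_big; apply: eq_bigr => l _; rewrite mulr_sumr.
    by apply: eq_bigr => m _; rewrite !mulrA.
  - rewrite mu_np //; have C0 := @cone0 R n c d. apply: cone_ext C0 _ _ => // s k.
    by rewrite mul0r.
rewrite muS in C; apply: cone_ext C _ _ => // s k.
symmetry; rewrite qe /correlator_of.
under eq_bigr => m _ do rewrite pe.
rewrite exchange_big; apply: eq_bigr => J _; by rewrite mulr_sumr.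
Qed.

End Fwd.

Section Bwd.
Variables (R : realFieldType) (n : nat) (c : 'I_n -> nat) (d : nat).
Hypothesis hd0 : (0 < d)%N.
Hypothesis hc : forall j, (0 < c j)%N.

Definition ext J (sJ : input_on c J) : input c := fun j =>
  match (j \in J) as b return (j \in J) = b -> 'I_(c j) with
  | true => fun h => sJ (exist _ j h)
  | false => fun _ => Ordinal (hc j)
  end (erefl _).

Lemma res_ext J (sJ : input_on c J) : res_in (ext sJ) = sJ.
Proof.
apply: functional_extensionality_dep => [[j h]].
rewrite /res_in /ext /=.
have : forall b (e : (j \in J) = b),
  match b as b return (j \in J) = b -> 'I_(c j) with
  | true => fun h => sJ (exist _ j h)
  | false => fun _ => Ordinal (hc j)
  end e = sJ (exist _ j h).
  case=> e; first by rewrite (bool_irrelevance e h).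
  by have H := etrans (esym e) h; discriminate H.
exact.
Qed.

Definition single (J : {set 'I_n}) (v : 'I_d) : output_on d J :=
  [ffun x => if Some x == [pick y : parties J] then v else z0 hd0].

Lemma sum_single J v : J != set0 -> (\sum_(x : parties J) (single J v x : nat))%N = v.
Proof.
case/set0Pn => j0 h0.
rewrite /single; case: (pickP (fun y : parties J => true)) => [x0 _ | H]; last by have := H (exist _ j0 h0).
rewrite (bigD1 x0) //= ffunE eqxx big1 ?addn0 // => x xx0.
by rewrite ffunE (inj_eq Some_inj) (negbTE xx0).
Qed.

Lemma sum_pred1 (T : finType) (a : T) : \sum_(x : T) ((a == x)%:R : R) = 1.
Proof.
rewrite (bigD1 a) //= eqxx big1 ?addr0 // => x xa.
by rewrite eq_sym (negbTE xa).
Qed.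

Lemma choose_bip N (f : 'I_N -> input c -> 'I_d) :
  (forall i, bipartite_linear (f i)) ->
  exists (Ji : 'I_N -> {set 'I_n}) (f1 : forall i, input_on c (Ji i) -> 'I_d)
    (f2 : forall i, input_on c (~: Ji i) -> 'I_d),
    forall i, proper_part (Ji i) /\
      forall s, (f i s : nat) = ((f1 i (res_in s) + f2 i (res_in s)) %% d)%N.
Proof.
move=> H.
exists (fun i => proj1_sig (constructive_indefinite_description _ (H i))).
exists (fun i => proj1_sig (constructive_indefinite_description _
          (proj2_sig (constructive_indefinite_description _ (H i))))).
exists (fun i => proj1_sig (constructive_indefinite_description _
          (proj2_sig (constructive_indefinite_description _
          (proj2_sig (constructive_indefinite_description _ (H i))))))).
move=> i.
exact: (proj2_sig (constructive_indefinite_description _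
          (proj2_sig (constructive_indefinite_description _
          (proj2_sig (constructive_indefinite_description _ (H i))))))).
Qed.

Lemma setC_neq0 (J : {set 'I_n}) : J != setT -> ~: J != set0.
Proof. by apply: contra => /eqP H; rewrite -(setCK J) H setC0. Qed.

Lemma bwd (q : input c -> 'I_d -> R) : in_hull_bilinear q -> svetlichny_correlator q.
Proof.
move=> [N [w [f [w0 wS fb qe]]]].
have [Ji [f1 [f2 Hi]]] := choose_bip fb.
pose mu (J : {set 'I_n}) := \sum_i w i * (Ji i == J)%:R.
pose w' J i := if mu J != 0 then w i * (Ji i == J)%:R / mu J else w i.
pose P' (J : {set 'I_n}) (i : 'I_N) (sJ : input_on c J) (mJ : output_on d J) : R :=
  (single J (f1 i (res_in (ext sJ))) == mJ)%:R.
pose Q' (J : {set 'I_n}) (i : 'I_N) (sK : input_on c (~: J)) (mK : output_on d (~: J)) : R :=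
  (single (~: J) (f2 i (res_in (ext sK))) == mK)%:R.
pose pJ J s m := \sum_i w' J i * P' J i (res_in s) (res_out J m)
                              * Q' J i (res_in s) (res_out (~: J) m).
pose p s m := \sum_J mu J * pJ J s m.
have mu0 J : 0 <= mu J by apply: sumr_ge0 => i _; rewrite mulr_ge0 ?ler0n.
have key J i : mu J * w' J i = w i * (Ji i == J)%:R.
  rewrite /w'; case: ifP => [nz | /negbFE/eqP z].
  - by rewrite mulrCA mulfV // mulr1.
  - rewrite z mul0r; symmetry; apply: (psumr_eq0P _ z) => // j _.
    by rewrite mulr_ge0 ?ler0n.
exists p; split.
- exists mu, pJ; split.
  + exact: mu0.
  + rewrite /mu exchange_big /=; rewrite -[in RHS]wS; apply: eq_bigr => i _.
    by rewrite -mulr_sumr sum_pred1 mulr1.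
  + move=> J npJ; apply: big1 => i _; case: eqP => [E|]; last by rewrite mulr0.
    by rewrite -E (proj1 (Hi i)) in npJ.
  + move=> J pJJ; exists N, (w' J), (P' J), (Q' J); split => //.
    * move=> i; rewrite /w'; case: ifP => // nz.
      by apply: divr_ge0 => //; rewrite mulr_ge0 ?ler0n.
    * rewrite /w'; case nz : (mu J != 0) => //.
      by rewrite -(mulr_suml _ _ (fun l => w l * (Ji l == J)%:R) (mu J)^-1) mulfV.
    * by move=> i sJ; split => [mJ|]; [exact: ler0n | exact: sum_pred1].
    * by move=> i sJ; split => [mJ|]; [exact: ler0n | exact: sum_pred1].
  + by [].
- move=> s k; rewrite qe /correlator_of.
  transitivity (\sum_i w i * \sum_(m : output n d | ((\sum_j (m j : nat)) %% d)%N == k)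
     P' (Ji i) i (res_in s) (res_out (Ji i) m) * Q' (Ji i) i (res_in s) (res_out (~: Ji i) m)).
    apply: eq_bigr => i _; congr (_ * _).
    have [pr fe] := Hi i; move: pr => /andP [ne0 neT].
    rewrite /P' /Q' (sum_glue R hd0) /det_correlator eq_sym -val_eqE /= fe.
    rewrite glue_sum !sum_single ?setC_neq0 // !res_ext.
    by case: (_ == _).
  transitivity (\sum_i \sum_J w i * (Ji i == J)%:R *
     \sum_(m : output n d | ((\sum_j (m j : nat)) %% d)%N == k)
       P' J i (res_in s) (res_out J m) * Q' J i (res_in s) (res_out (~: J) m)).
    apply: eq_bigr => i _.
    rewrite [RHS](bigD1 (Ji i)) //= eqxx mulr1 [X in _ + X]big1 ?addr0 //.
    by move=> J; rewrite eq_sym => /negbTE ->; rewrite mulr0 mul0r.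
  rewrite exchange_big /= [RHS]exchange_big /=; apply: eq_bigr => J _.
  under [RHS]eq_bigr do rewrite mulr_sumr.
  rewrite [RHS]exchange_big /=; apply: eq_bigr => i _.
  rewrite -key mulr_sumr; apply: eq_bigr => m _.
  by rewrite !mulrA.
Qed.

End Bwd.

Unset Implicit Arguments.

Theorem theorem2p4p1 (R : realFieldType) (n : nat) (c : 'I_n -> nat) (d : nat)
  (hn : (2 <= n)%N) (hc : forall j, (0 < c j)%N) (hd : prime d)
  (q : input c -> 'I_d -> R) :
  svetlichny_correlator q <-> in_hull_bilinear q.
Proof.
have hd0 : (0 < d)%N := prime_gt0 hd.
split.
- exact: (fwd hd0).
- exact: (bwd hd0 hc).
Qed.
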